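(* Let $p$ be prime, $G=\mathbb{Z}_{p^2}\times\mathbb{Z}_p$, and $A\subset G$ with $\#A=p$ and $\mathcal{Z}_A\neq\emptyset$. Then $A$ is a tile of $G$ and also a spectral set.
   Context: For $b=(b_1,b_2)\in G$ let $\chi_b(a_1,a_2)=e^{2\pi i(a_1b_1/p^2+a_2b_2/p)}$, $\widehat{1}_A(b)=\sum_{a\in A}\overline{\chi_b(a)}$, and $\mathcal{Z}_A=\{b\in G:\widehat{1}_A(b)=0\}$. $A$ is a spectral set if there is $B\subset G$ with $\{\chi_b|_A:b\in B\}$ an orthogonal basis of $L^2(A)$ (counting measure). $A$ is a tile if there is $T\subset G$ with $A\oplus T=G$ (every element of $G$ uniquely $a+t$, $a\in A,t\in T$). *)

(* Defs.v *)
From HB Require Import structures.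
From mathcomp Require Import all_boot all_order all_algebra all_field.
Set Implicit Arguments. Unset Strict Implicit. Unset Printing Implicit Defensive.
Import Order.TTheory GRing.Theory Num.Theory.
Local Open Scope ring_scope.

(* The group G = Z_{p^2} x Z_p (p prime, so p^2 >= 4 and p >= 2, and the
   'Z_ notations denote the intended cyclic groups). *)
Definition G (p : nat) : finType := ('Z_(p ^ 2) * 'Z_p)%type.

Definition addG (p : nat) (x y : G p) : G p := (x.1 + y.1, x.2 + y.2)%R.

(* zeta p = e^{2 pi i / p^2}:  n.-root (-1) is the n-th root of -1 with
   minimal nonnegative argument, i.e. e^{i pi / n}; its square is e^{2 pi i/n}. *)
Definition zeta (p : nat) : algC := ((p ^ 2)%N.-root (-1)) ^+ 2.

(* chi_b(a) = e^{2 pi i (a1 b1 / p^2 + a2 b2 / p)} = zeta^(a1 b1 + p a2 b2). *)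
Definition chi (p : nat) (b a : G p) : algC :=
  zeta p ^+ (val a.1 * val b.1 + p * (val a.2 * val b.2))%N.

Definition hat1 (p : nat) (A : {set G p}) (b : G p) : algC :=
  \sum_(a in A) (chi b a)^*.

Definition ZA (p : nat) (A : {set G p}) : {set G p} :=
  [set b | hat1 A b == 0].

Definition is_tile (p : nat) (A : {set G p}) : Prop :=
  exists T : {set G p}, forall g : G p,
    exists! u : G p * G p, [/\ u.1 \in A, u.2 \in T & addG u.1 u.2 = g].

Definition ipA (p : nat) (A : {set G p}) (f h : G p -> algC) : algC :=
  \sum_(a in A) f a * (h a)^*.

(* A is spectral: there is B such that {chi_b|_A : b in B} is an orthogonal
   basis of L^2(A): the family is pairwise orthogonal (distinct indices) and
   has #A = dim L^2(A) members (orthogonal nonzero vectors are independent,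
   each chi_b|_A has norm #A <> 0). *)
Definition is_spectral (p : nat) (A : {set G p}) : Prop :=
  exists B : {set G p}, #|B| = #|A| /\
    forall b b', b \in B -> b' \in B -> b != b' -> ipA A (chi b) (chi b') = 0.

(* Main.v *)
Require Import Defs.
From HB Require Import structures.
From mathcomp Require Import all_boot all_order all_algebra all_field.
From mathcomp Require Import zify ring.
Set Implicit Arguments. Unset Strict Implicit. Unset Printing Implicit Defensive.
Import Order.TTheory GRing.Theory Num.Theory.

Module Aux.
Local Open Scope ring_scope.
Lemma geom0 (w : algC) n : (0 < n)%N -> w ^+ n = 1 -> w != 1 -> \sum_(m < n) w ^+ m = 0.
Proof.
move=> n0 wn w1; have := subrX1 w n; rewrite wn subrr => /esym/eqP.
by rewrite mulf_eq0 subr_eq0 (negbTE w1) => /eqP.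
Qed.

Lemma fourier_shift (T : finType) (A : {set T}) (E : T -> nat) (z : algC) n s :
  (0 < n)%N -> n.-primitive_root z ->
  (forall m, ~~ (n %| m * s)%N -> \sum_(a in A) z ^+ (m * E a) = 0) ->
  forall k, #|[set a in A | E a == k %[mod n]]| = #|[set a in A | E a == k + s %[mod n]]|.
Proof.
move=> n0 pz Hs.
have z0 : z != 0.
  apply/negP => /eqP z0; move: (prim_expr_order pz); rewrite z0 expr0n gtn_eqF //.
  by move/eqP; rewrite eq_sym oner_eq0.
pose F k := \sum_(m < n) \sum_(a in A) (z ^+ (E a) / z ^+ k) ^+ m.
have FE k : F k = (#|[set a in A | E a == k %[mod n]]| * n)%:R.
  rewrite /F exchange_big /=.
  rewrite (eq_bigr (fun a => if E a == k %[mod n] then n%:R else 0)).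
    rewrite -big_mkcondr /= (eq_bigl (fun a => a \in [set a in A | E a == k %[mod n]])).
      by rewrite sumr_const natrM mulr_natl.
    by move=> a; rewrite inE.
  move=> a _; case: ifP => Ha.
    have -> : z ^+ E a = z ^+ k by apply/eqP; rewrite (eq_prim_root_expr pz).
    rewrite divff ?expf_neq0 //.
    by rewrite (eq_bigr (fun _ => 1)) ?sumr_const ?card_ord // => i _; rewrite expr1n.
  apply: geom0 => //.
    by rewrite expr_div_n -!exprM mulnC exprM (prim_expr_order pz) mulnC exprM (prim_expr_order pz) !expr1n divr1.
  apply/negP => /eqP /divr1_eq /eqP; rewrite (eq_prim_root_expr pz) Ha //.
have Fs k : F k = F (k + s)%N.
  apply: eq_bigr => m _.
  have e j : \sum_(a in A) (z ^+ E a / z ^+ j) ^+ m = (\sum_(a in A) z ^+ (m * E a)) / (z ^+ j) ^+ m.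
    by rewrite mulr_suml; apply: eq_bigr => a _; rewrite expr_div_n -!GRing.exprM (mulnC (E a)).
  rewrite !e; case: (boolP (n %| m * s)%N) => H; last by rewrite Hs // !mul0r.
  have Hsm : z ^+ (s * m) = 1.
    by apply/eqP; rewrite -(expr0 z) (eq_prim_root_expr pz) mod0n mulnC; apply/eqP/eqP.
  by rewrite exprD exprMn -(GRing.exprM z s m) Hsm mulr1.
move=> k; have := Fs k; rewrite !FE => /eqP; rewrite eqr_nat eqn_pmul2r //.
by move/eqP.
Qed.

Local Close Scope ring_scope.
Lemma structure (T : finType) (A : {set T}) (E : T -> nat) p s n :
  0 < p -> 0 < s -> n = p * s -> #|A| = p ->
  (forall k, #|[set a in A | E a == k %[mod n]]| = #|[set a in A | E a == k + s %[mod n]]|) ->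
  exists r : nat,
  [/\ {in A &, forall a a', E a = E a' %[mod n] -> a = a'},
      forall a, a \in A -> E a = r %[mod s] &
      forall j, exists2 a, a \in A & E a = r + j * s %[mod n]].
Proof.
move=> p0 s0 En cA Hc.
have n0 : 0 < n by rewrite En muln_gt0 p0.
have [a0 a0A] : exists a0, a0 \in A.
  by apply/set0Pn; rewrite -card_gt0 cA.
exists (E a0).
have H3 : forall j, exists2 a, a \in A & E a = E a0 + j * s %[mod n].
  have pos : forall j, 0 < #|[set a in A | E a == E a0 + j * s %[mod n]]|.
    elim=> [|j IH].
      by rewrite card_gt0; apply/set0Pn; exists a0; rewrite inE a0A mul0n addn0 eqxx.
    by rewrite mulSnr addnA -Hc.
  move=> j; have := pos j; rewrite card_gt0 => /set0Pn [a]; rewrite inE => /andP [aA /eqP ea].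
  by exists a.
pose Phi (a : T) : 'I_n := Ordinal (ltn_pmod (E a) n0).
pose C := [set (Ordinal (ltn_pmod (E a0 + val j * s) n0)) | j : 'I_p].
have cC : #|C| = p.
  rewrite card_imset ?card_ord // => j j' /(congr1 val) /= /eqP.
  rewrite eqn_modDl En -!muln_modl // !modn_small // eqn_pmul2r // => /eqP ejj.
  by apply: val_inj.
have CI : C \subset Phi @: A.
  apply/subsetP => x /imsetP [j _ ->]; have [a aA ea] := H3 j.
  by apply/imsetP; exists a => //; apply: val_inj => /=.
have cI : #|Phi @: A| = p.
  apply/eqP; rewrite eqn_leq -{1}cA leq_imset_card /= -{1}cC.
  exact: subset_leq_card.
have inj : {in A &, injective Phi}.
  by apply/imset_injP; rewrite cI cA.
have IC : Phi @: A \subset C.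
  have eCI : C = Phi @: A by apply/eqP; rewrite eqEcard CI cI cC leqnn.
  by rewrite -eCI.
split => //.
- move=> a a' aA a'A ea; apply: inj => //; exact: val_inj.
move=> a aA; have : Phi a \in C by apply: (subsetP IC); apply: imset_f.
case/imsetP => j _ /(congr1 val) /= ea.
have sn : s %| n by rewrite En dvdn_mull.
by rewrite -(modn_dvdm _ sn) ea modn_dvdm // addnC modnMDl.
Qed.

Lemma valZpD m (x y : 'Z_m) : 1 < m -> val (x + y)%R = ((val x + val y) %% m).
Proof. by move=> m1; rewrite /=; congr (_ %% _); apply: Zp_cast. Qed.

Lemma valZpMn m (x : 'Z_m) k : 1 < m -> val (x *+ k)%R = ((val x * k) %% m).
Proof. by move=> m1; rewrite Zp_mulrn /=; congr (_ %% _); apply: Zp_cast. Qed.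

Definition Eb p (b a : G p) : nat := val a.1 * val b.1 + p * (val a.2 * val b.2).

Definition mulk p (k : nat) (b : G p) : G p := (b.1 *+ k, b.2 *+ k)%R.
Arguments Eb : clear implicits.
Arguments mulk : clear implicits.

Lemma chiE p b a : chi b a = (zeta p ^+ Eb p b a)%R.
Proof. by []. Qed.

Lemma pmodH p u : 0 < p -> p * (u %% p) = (p * u) %% (p ^ 2).
Proof. by move=> p0; rewrite -mulnn muln_modr. Qed.

Lemma E_add p (b x y : G p) : prime p ->
  Eb p b (addG x y) = Eb p b x + Eb p b y %[mod p ^ 2].
Proof.
move=> pp; have p1 := prime_gt1 pp; have p0 := prime_gt0 pp.
have q1 : 1 < p ^ 2 by rewrite (ltn_exp2l 0).
have h1 := valZpD x.1 y.1 q1; have h2 := valZpD x.2 y.2 p1; rewrite /= in h1 h2.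
rewrite /Eb /addG /= h1 h2.
rewrite [p * (_ * b.2)]mulnA pmodH //.
rewrite -modnDml modnMml modnDml -modnDmr modnMml modnDmr.
congr (_ %% _); ring.
Qed.

Lemma E_mul p (b a : G p) k : prime p ->
  Eb p (mulk p k b) a = k * Eb p b a %[mod p ^ 2].
Proof.
move=> pp; have p1 := prime_gt1 pp; have p0 := prime_gt0 pp.
have q1 : 1 < p ^ 2 by rewrite (ltn_exp2l 0).
have h1 := valZpMn b.1 k q1; have h2 := valZpMn b.2 k p1; rewrite /= in h1 h2.
rewrite /Eb /mulk /= h1 h2.
rewrite [p * (_ * _)]mulnCA pmodH // mulnCA.
rewrite -modnDml modnMmr modnDml -modnDmr modnMmr modnDmr.
congr (_ %% _); ring.
Qed.

Definition subG p (g a : G p) : G p := (g.1 - a.1, g.2 - a.2)%R.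
Arguments subG : clear implicits.

Lemma addG_sub p (g a : G p) : addG a (subG p g a) = g.
Proof. by case: g => g1 g2; rewrite /addG /subG /= ![(a.1 + _)%R]addrC ![(a.2 + _)%R]addrC !subrK. Qed.

Lemma addG_inj p (a t t' : G p) : addG a t = addG a t' -> t = t'.
Proof.
case: t => t1 t2; case: t' => t1' t2' e.
move: (congr1 fst e) (congr1 snd e) => /addrI h1 /addrI h2.
by move: h1 h2 => /= -> ->.
Qed.

Lemma tile_of p (A : {set G p}) (b : G p) n s r : prime p -> 0 < s -> n = p * s -> n %| p ^ 2 ->
  {in A &, forall a a', Eb p b a = Eb p b a' %[mod n] -> a = a'} ->
  (forall a, a \in A -> Eb p b a = r %[mod s]) ->
  (forall j, exists2 a, a \in A & Eb p b a = r + j * s %[mod n]) -> is_tile A.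
Proof.
move=> pp s0 En nq inj modr H3.
have n0 : 0 < n by rewrite En muln_gt0 prime_gt0.
have sn : s %| n by rewrite En dvdn_mull.
have sln : s <= n by apply: dvdn_leq.
have Eadd x y : Eb p b (addG x y) = Eb p b x + Eb p b y %[mod n].
  by rewrite -(modn_dvdm _ nq) E_add // modn_dvdm.
exists [set t | Eb p b t %% n < s] => g.
pose D := Eb p b g + n.-1 * r.
pose j := D %/ s; pose s' := D %% s.
have [a aA ea] := H3 j.
pose t := subG p g a.
have e1 : Eb p b g = Eb p b a + Eb p b t %[mod n] by rewrite -Eadd addG_sub.
have e3 : Eb p b g = (r + j * s) + s' %[mod n].
  rewrite /s' /j -addnA -divn_eq /D addnCA -mulSn prednK //.
  by rewrite [in RHS]addnC [n * r]mulnC modnMDl.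
have et : Eb p b t %% n = s'.
  have : (r + j * s) + Eb p b t = (r + j * s) + s' %[mod n].
    by rewrite -e3 e1 -[in RHS]modnDml ea modnDml.
  move/eqP; rewrite eqn_modDl => /eqP ->; rewrite modn_small //.
  by apply: leq_trans (ltn_pmod _ s0) sln.
exists (a, t); split.
  split => //=; [by rewrite inE et ltn_pmod | exact: addG_sub].
move=> [a' t'] [/= a'A]; rewrite inE => ht' ge.
have e1' : Eb p b g = Eb p b a' + Eb p b t' %[mod n] by rewrite -Eadd ge.
have ett : Eb p b t' %% n = Eb p b t %% n.
  have h : Eb p b a + Eb p b t = Eb p b a' + Eb p b t' %[mod s].
    by rewrite -(modn_dvdm _ sn) -e1 e1' modn_dvdm.
  move: h; rewrite -modnDml (modr a aA) modnDml -[in RHS]modnDml (modr a' a'A) modnDml.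
  move/eqP; rewrite eqn_modDl => /eqP h.
  rewrite -(modn_small ht') -[in RHS](modn_small (_ : Eb p b t %% n < s)); last by rewrite et ltn_pmod.
  by rewrite !modn_dvdm.
have eaa : a' = a.
  apply: inj => //; apply/eqP; rewrite -(eqn_modDr (Eb p b t')) -e1' e1.
  by rewrite -modnDmr -ett modnDmr.
subst a'; congr pair; apply: (@addG_inj p a); rewrite ge addG_sub //.
Qed.

Local Open Scope ring_scope.
Lemma unit_conj (z : algC) n : (0 < n)%N -> z ^+ n = 1 -> z * z^* = 1.
Proof.
move=> n0 zn; rewrite -normCK.
have : `|z| ^+ n = 1 by rewrite -normrX zn normr1.
by move/eqP; rewrite pexpr_eq1 ?normr_ge0 -?lt0n // => /eqP ->; rewrite expr1n.
Qed.

Lemma spec_of p (A : {set G p}) (b : G p) n : prime p -> #|A| = p -> (0 < n)%N ->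
  n.-primitive_root (zeta p) -> (n %| p ^ 2)%N ->
  (forall m, coprime m p -> \sum_(a in A) zeta p ^+ (m * Eb p b a)%N = 0) -> is_spectral A.
Proof.
move=> pp cA n0 pz nq Gal.
have zm x y : x = y %[mod p ^ 2] -> zeta p ^+ x = zeta p ^+ y.
  by move=> e; apply/eqP; rewrite (eq_prim_root_expr pz) -(modn_dvdm x nq) e modn_dvdm.
have chik k a : chi (mulk p k b) a = zeta p ^+ (k * Eb p b a) by rewrite chiE; apply: zm; apply: E_mul.
have one e : zeta p ^+ e * (zeta p ^+ e)^* = 1.
  by apply: (unit_conj n0); rewrite -GRing.exprM mulnC GRing.exprM (prim_expr_order pz) expr1n.
have orth1 k k' : (k' < k)%N -> (k < p)%N -> ipA A (chi (mulk p k b)) (chi (mulk p k' b)) = 0.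
  move=> kk kp; rewrite /ipA; apply: etrans (Gal (k - k')%N _).
    apply: eq_bigr => a _; rewrite !chik.
    by rewrite -{1}(subnK (ltnW kk)) mulnDl exprD -mulrA one mulr1.
  rewrite coprime_sym prime_coprime // gtnNdvd ?subn_gt0 //.
  by apply: leq_ltn_trans (leq_subr _ _) kp.
have conjip x y : ipA A x y = (ipA A y x)^*.
  by rewrite /ipA rmorph_sum; apply: eq_bigr => a _; rewrite rmorphM /= conjCK mulrC.
have orth k k' : (k < p)%N -> (k' < p)%N -> k != k' -> ipA A (chi (mulk p k b)) (chi (mulk p k' b)) = 0.
  move=> kp k'p; case: (ltngtP k k') => // h _.
    by rewrite conjip orth1 // conjC0.
  exact: orth1.
have self k : ipA A (chi (mulk p k b)) (chi (mulk p k b)) = p%:R.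
  rewrite /ipA (eq_bigr (fun _ => 1)) ?sumr_const ?cA // => a _.
  by rewrite chik one.
exists [set mulk p (val k) b | k : 'I_p]; split.
  rewrite card_imset ?card_ord // => k k' e; apply/val_inj/eqP; apply: contraT => ne.
  have := orth k k' (ltn_ord k) (ltn_ord k') ne; rewrite -e self => /eqP.
  by rewrite pnatr_eq0 gtn_eqF // prime_gt0.
move=> x y /imsetP [k _ ->] /imsetP [k' _ ->] ne.
apply: orth; rewrite ?ltn_ord //.
by apply: contraNneq ne => ->.
Qed.

Lemma zeta_order p : prime p ->
  exists2 i, (i <= 2)%N & (p ^ i)%N.-primitive_root (zeta p).
Proof.
move=> pp; have q0 : (0 < p ^ 2)%N by rewrite expn_gt0 prime_gt0.
have zq : zeta p ^+ (p ^ 2) = 1.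
  rewrite /zeta -GRing.exprM mulnC GRing.exprM rootCK //.
  by rewrite expr2 mulN1r opprK.
have [m pm mq] := prim_order_exists q0 zq.
have [i ile em] := dvdn_pfactor m 2 pp mq.
by exists i => //; rewrite -em.

Qed.


Lemma finish p (A : {set G p}) (b : G p) n s : prime p -> #|A| = p -> (0 < s)%N ->
  n = (p * s)%N -> (n %| p ^ 2)%N -> n.-primitive_root (zeta p) ->
  (forall m, coprime m p -> \sum_(a in A) zeta p ^+ (m * Eb p b a)%N = 0) ->
  is_tile A /\ is_spectral A.
Proof.
move=> pp cA s0 En nq pz Gal.
have n0 : (0 < n)%N by rewrite En muln_gt0 prime_gt0.
split; last exact: (spec_of pp cA n0 pz nq Gal).
have H := @fourier_shift _ A (Eb p b) (zeta p) n s n0 pz.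
have [|r [inj modr H3]] := structure (prime_gt0 pp) s0 En cA (H _).
  move=> m nm; apply: Gal; rewrite coprime_sym prime_coprime //.
  by apply: contra nm => pm; rewrite En dvdn_mul.
exact: (tile_of pp s0 En nq inj modr H3).
Qed.
End Aux.
Import Aux.

Theorem proposition5p3 (p : nat) (A : {set G p}) :
  prime p -> #|A| = p -> ZA A != set0 -> is_tile A /\ is_spectral A.
Proof.
move=> pp cA /set0Pn [b]; rewrite inE => /eqP hb.
have S0 : (\sum_(a in A) zeta p ^+ (1 * Eb p b a)%N = 0)%R.
  have : ((hat1 A b)^* = 0)%R by rewrite hb conjC0.
  rewrite /hat1 rmorph_sum => h; apply: etrans h; apply: eq_bigr => a _.
  by rewrite mul1n /= conjCK.
have [i ile pz] := zeta_order pp.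
have Gal m : coprime m p -> (\sum_(a in A) zeta p ^+ (m * Eb p b a)%N = 0)%R.
  move=> cm; have cmn : coprime m (p ^ i) by rewrite coprimeXr.
  have [u Hu] := Qn_aut_exists cmn.
  have h : u (\sum_(a in A) zeta p ^+ (1 * Eb p b a)%N)%R = 0%R by rewrite S0 rmorph0.
  rewrite rmorph_sum in h; apply: etrans h.
  apply: eq_bigr => a _; rewrite Hu; first by rewrite mul1n -(GRing.exprM (zeta p)) mulnC.
  by rewrite -(GRing.exprM (zeta p)) mulnC GRing.exprM (prim_expr_order pz) expr1n.
case: i ile pz Gal => [|[|[|i]]] // _ pz Gal.
- have z1 : zeta p = 1%R by have := prim_expr_order pz; rewrite expn0 expr1.
  move: S0; rewrite (eq_bigr (fun _ => 1%R)) => [|a _]; last by rewrite z1 expr1n.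
  by rewrite sumr_const cA => /eqP; rewrite pnatr_eq0 gtn_eqF // prime_gt0.
- apply: (finish (s := 1) pp cA _ _ _ pz Gal) => //; [by rewrite expn1 muln1 | exact: dvdn_exp2l].
- by apply: (finish (s := p) pp cA _ _ _ pz Gal) => //; rewrite ?prime_gt0 ?mulnn.
Qed.
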